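(* Let $(\mathfrak H_{-,+},\mathfrak H,\Gamma_0,\Gamma_1)$ be an m-boundary tuple for $\mathcal A^*$, where $\mathcal A$ is a closed densely defined symmetric operator in a Hilbert space $\mathfrak X$. Let $V$ be an arbitrary linear homeomorphism from $\mathfrak H$ onto $\mathfrak H_{-,+}$. Then $(\mathfrak H,V^{-1}\Gamma_0,V^\#\Gamma_1)$ is a boundary triple for $\mathcal A^*$.
   Context: Mixed-order duality: Hilbert spaces $\mathfrak H,\mathfrak H_{-,+},\mathfrak H_{+,-}$ with $\widetilde{\mathfrak H}_{\mp,\pm}:=\mathfrak H\cap\mathfrak H_{\mp,\pm}$ dense in $\mathfrak H$ and in $\mathfrak H_{\mp,\pm}$, forms $\|h\|^2_{\mathfrak H_{\mp,\pm}}$ on $\widetilde{\mathfrak H}_{\mp,\pm}$ closed in $\mathfrak H$, and $\|h\|_{\mathfrak H_{\pm,\mp}}=\sup_{0\ne g\in\widetilde{\mathfrak H}_{\mp,\pm}}|(g|h)_{\mathfrak H}|/\|g\|_{\mathfrak H_{\mp,\pm}}$ for $h\in\widetilde{\mathfrak H}_{\pm,\mp}$; $\langle\cdot|\cdot\rangle_{\mathfrak H}$ is the unique bounded sesquilinear extension of $(\cdot|\cdot)_{\mathfrak H}$ to $\mathfrak H_{-,+}\times\mathfrak H_{+,-}$, with $\langle h_{+,-}|h_{-,+}\rangle_{\mathfrak H}:=\overline{\langle h_{-,+}|h_{+,-}\rangle_{\mathfrak H}}$. An m-boundary tuple for $\mathcal A^*$ is $(\mathfrak H_{-,+},\mathfrak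 H,\Gamma_0,\Gamma_1)$ with linear $\Gamma_0:\mathrm{dom}\mathcal A^*\to\mathfrak H_{-,+}$, $\Gamma_1:\mathrm{dom}\mathcal A^*\to\mathfrak H_{+,-}$ such that (M1) $f\mapsto\{\Gamma_0f,\Gamma_1f\}$ maps $\mathrm{dom}\mathcal A^*$ onto $\mathfrak H_{-,+}\oplus\mathfrak H_{+,-}$ and (M2) $(\mathcal A^*f|g)_{\mathfrak X}-(f|\mathcal A^*g)_{\mathfrak X}=\langle\Gamma_1f|\Gamma_0g\rangle_{\mathfrak H}-\langle\Gamma_0f|\Gamma_1g\rangle_{\mathfrak H}$ for all $f,g$. The $\mathfrak H$-pairing-adjoint of $V$ is $V^\#:\mathfrak H_{+,-}\to\mathfrak H$ with $\langle Vf|g\rangle_{\mathfrak H}=(f|V^\#g)_{\mathfrak H}$ for $f\in\mathfrak H$, $g\in\mathfrak H_{+,-}$. A boundary triple $(\mathfrak H,\widehat\Gamma_0,\widehat\Gamma_1)$ for $\mathcal A^*$ consists of linear maps $\widehat\Gamma_j:\mathrm{dom}\mathcal A^*\to\mathfrak H$ such that $f\mapsto\{\widehat\Gamma_0f,\widehat\Gamma_1f\}$ maps $\mathrm{dom}\mathcal A^*$ onto $\mathfrak H\oplus\mathfrak H$ and $(\mathcal A^*f|g)_{\mathfrak X}-(f|\mathcal A^*g)_{\mathfrak X}=(\widehat\Gamma_1f|\widehat\Gamma_0g)_{\mathfrak H}-(\widehat\Gamma_0f|\widehat\Gamma_1g)_{\mathfrak H}$ for all $f,g\in\mathrm{dom}\mathcal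 A^*$. *)

(* Defs.v *)
From mathcomp Require Import all_boot all_order all_algebra.
From mathcomp Require Export complex.
From mathcomp Require Export reals.
Import Order.TTheory GRing.Theory Num.Theory.

Set Implicit Arguments.
Unset Strict Implicit.
Unset Printing Implicit Defensive.

Local Open Scope ring_scope.

Section Defs.
Variable R : realType.
Local Notation C := R[i].

Definition cconj (z : C) : C := conjc z.
Definition cabs (z : C) : R :=
  Num.sqrt (complex.Re z ^+ 2 + complex.Im z ^+ 2).

Section Space.
Variable W : lmodType C.
Implicit Types (P : W -> Prop) (ip : W -> W -> C).

Definition subspace P : Prop :=
  P 0 /\ (forall (a : C) x y, P x -> P y -> P (a *: x + y)).

Definition inner_product_on P ip : Prop :=
  (forall (a : C) x y z, P x -> P y -> P z ->
      ip (a *: x + y) z = a * ip x z + ip y z) /\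
  (forall x y, P x -> P y -> ip y x = cconj (ip x y)) /\
  (forall x, P x -> x <> 0 -> 0 < ip x x).

Definition ipnorm ip (x : W) : R := Num.sqrt (complex.Re (ip x x)).

Definition cauchy_seq (n : W -> R) (u : nat -> W) : Prop :=
  forall e : R, 0 < e -> exists N : nat, forall m k : nat,
    (N <= m)%N -> (N <= k)%N -> n (u m - u k) < e.

Definition converges_to (n : W -> R) (u : nat -> W) (l : W) : Prop :=
  forall e : R, 0 < e -> exists N : nat, forall m : nat,
    (N <= m)%N -> n (u m - l) < e.

Definition complete_on P (n : W -> R) : Prop :=
  forall u : nat -> W, (forall k, P (u k)) -> cauchy_seq n u ->
    exists l, P l /\ converges_to n u l.

Definition hilbert_on P ip : Prop :=
  [/\ subspace P, inner_product_on P ip & complete_on P (ipnorm ip)].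

Definition dense_in (D P : W -> Prop) (n : W -> R) : Prop :=
  forall x, P x -> forall e : R, 0 < e -> exists y, D y /\ n (x - y) < e.

Definition closed_form_in (P : W -> Prop) (nP : W -> R)
    (D : W -> Prop) (t : W -> R) : Prop :=
  forall (u : nat -> W) (x : W), (forall k, D (u k)) -> P x ->
    converges_to nP u x ->
    (forall e : R, 0 < e -> exists N : nat, forall m k : nat,
        (N <= m)%N -> (N <= k)%N -> t (u m - u k) < e) ->
    D x /\ (forall e : R, 0 < e -> exists N : nat, forall m : nat,
        (N <= m)%N -> t (u m - x) < e).

Definition is_sup_of (S : R -> Prop) (s : R) : Prop :=
  (forall r, S r -> r <= s) /\ (forall b, (forall r, S r -> r <= b) -> s <= b).

(* Mixed-order duality (see context).  PH, Pmp, Ppm are the Hilbert spaces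
   H, H_{-,+}, H_{+,-}, realised as subspaces of a common ambient space W,
   with inner products ipH, ipmp, ippm. *)
Definition tilde (PH P : W -> Prop) : W -> Prop := fun x => PH x /\ P x.

Definition mixed_order_duality (PH Pmp Ppm : W -> Prop)
    (ipH ipmp ippm : W -> W -> C) : Prop :=
  [/\ [/\ hilbert_on PH ipH, hilbert_on Pmp ipmp & hilbert_on Ppm ippm],
      [/\ dense_in (tilde PH Pmp) PH (ipnorm ipH),
          dense_in (tilde PH Pmp) Pmp (ipnorm ipmp),
          dense_in (tilde PH Ppm) PH (ipnorm ipH) &
          dense_in (tilde PH Ppm) Ppm (ipnorm ippm)],
      closed_form_in PH (ipnorm ipH) (tilde PH Pmp)
         (fun h => ipnorm ipmp h ^+ 2) /\
      closed_form_in PH (ipnorm ipH) (tilde PH Ppm)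
         (fun h => ipnorm ippm h ^+ 2) &
      (forall h, tilde PH Ppm h ->
         is_sup_of (fun r => exists g, [/\ tilde PH Pmp g, g <> 0 &
                      r = cabs (ipH g h) / ipnorm ipmp g])
                   (ipnorm ippm h)) /\
      (forall h, tilde PH Pmp h ->
         is_sup_of (fun r => exists g, [/\ tilde PH Ppm g, g <> 0 &
                      r = cabs (ipH g h) / ipnorm ippm g])
                   (ipnorm ipmp h))].

Definition pairing_extension (PH Pmp Ppm : W -> Prop)
    (ipH ipmp ippm : W -> W -> C) (pair : W -> W -> C) : Prop :=
  [/\ (forall (a : C) x y z, Pmp x -> Pmp y -> Ppm z ->
         pair (a *: x + y) z = a * pair x z + pair y z),
      (forall (a : C) x y z, Pmp x -> Ppm y -> Ppm z ->
         pair x (a *: y + z) = cconj a * pair x y + pair x z),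
      (exists c : R, forall x y, Pmp x -> Ppm y ->
         cabs (pair x y) <= c * ipnorm ipmp x * ipnorm ippm y) &
      (forall x y, tilde PH Pmp x -> tilde PH Ppm y -> pair x y = ipH x y)].

Definition pair_rev (pair : W -> W -> C) (hpm hmp : W) : C :=
  cconj (pair hmp hpm).

Definition pairing_adjoint (PH Ppm : W -> Prop) (ipH pair : W -> W -> C)
    (V Vsharp : W -> W) : Prop :=
  (forall g, Ppm g -> PH (Vsharp g)) /\
  (forall f g, PH f -> Ppm g -> pair (V f) g = ipH f (Vsharp g)).

Definition linear_homeomorphism (P : W -> Prop) (nP : W -> R)
    (Q : W -> Prop) (nQ : W -> R) (V : W -> W) : Prop :=
  [/\ (forall x, P x -> Q (V x)) /\
      (forall (a : C) x y, P x -> P y -> V (a *: x + y) = a *: V x + V y),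
      (forall x y, P x -> P y -> V x = V y -> x = y),
      (forall y, Q y -> exists x, P x /\ V x = y),
      (forall x0, P x0 -> forall e : R, 0 < e -> exists d : R, 0 < d /\
         forall x, P x -> nP (x - x0) < d -> nQ (V x - V x0) < e) &
      (forall x0, P x0 -> forall e : R, 0 < e -> exists d : R, 0 < d /\
         forall x, P x -> nQ (V x - V x0) < d -> nP (x - x0) < e)].

Definition inverse_on (P Q : W -> Prop) (V Vinv : W -> W) : Prop :=
  (forall x, P x -> Vinv (V x) = x) /\
  (forall y, Q y -> P (Vinv y) /\ V (Vinv y) = y).

End Space.

Section Operator.
Variable X : lmodType C.
Variable ipX : X -> X -> C.

Definition densely_defined (DA : X -> Prop) : Prop :=
  forall x : X, forall e : R, 0 < e -> exists y, DA y /\ ipnorm ipX (x - y) < e.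

Definition operator (DA : X -> Prop) (A : X -> X) : Prop :=
  subspace DA /\ (forall (a : C) x y, DA x -> DA y -> A (a *: x + y) = a *: A x + A y).

Definition closed_operator (DA : X -> Prop) (A : X -> X) : Prop :=
  forall (u : nat -> X) (x y : X), (forall k, DA (u k)) ->
    converges_to (ipnorm ipX) u x -> converges_to (ipnorm ipX) (A \o u) y ->
    DA x /\ A x = y.

Definition symmetric_op (DA : X -> Prop) (A : X -> X) : Prop :=
  forall x y, DA x -> DA y -> ipX (A x) y = ipX x (A y).

Definition closed_densely_defined_symmetric (DA : X -> Prop) (A : X -> X) : Prop :=
  [/\ operator DA A, densely_defined DA, closed_operator DA A & symmetric_op DA A].

Definition adj_dom (DA : X -> Prop) (A : X -> X) (f : X) : Prop :=
  exists h : X, forall g, DA g -> ipX (A g) f = ipX g h.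

Definition is_adjoint (DA : X -> Prop) (A : X -> X) (Astar : X -> X) : Prop :=
  forall f, adj_dom DA A f -> forall g, DA g -> ipX (A g) f = ipX g (Astar f).

Section Tuples.
Variable W : lmodType C.

Definition m_boundary_tuple (DA : X -> Prop) (A Astar : X -> X)
    (Pmp Ppm : W -> Prop) (pair : W -> W -> C) (G0 G1 : X -> W) : Prop :=
  let D := adj_dom DA A in
  [/\ (forall f, D f -> Pmp (G0 f) /\ Ppm (G1 f)),
      (forall (a : C) f g, D f -> D g ->
         G0 (a *: f + g) = a *: G0 f + G0 g /\ G1 (a *: f + g) = a *: G1 f + G1 g),
      (forall h0 h1, Pmp h0 -> Ppm h1 -> exists f, [/\ D f, G0 f = h0 & G1 f = h1]) &
      (forall f g, D f -> D g ->
         ipX (Astar f) g - ipX f (Astar g) =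
         pair_rev pair (G1 f) (G0 g) - pair (G0 f) (G1 g))].

Definition boundary_triple (DA : X -> Prop) (A Astar : X -> X)
    (PH : W -> Prop) (ipH : W -> W -> C) (Gh0 Gh1 : X -> W) : Prop :=
  let D := adj_dom DA A in
  [/\ (forall f, D f -> PH (Gh0 f) /\ PH (Gh1 f)),
      (forall (a : C) f g, D f -> D g ->
         Gh0 (a *: f + g) = a *: Gh0 f + Gh0 g /\
         Gh1 (a *: f + g) = a *: Gh1 f + Gh1 g),
      (forall h0 h1, PH h0 -> PH h1 -> exists f, [/\ D f, Gh0 f = h0 & Gh1 f = h1]) &
      (forall f g, D f -> D g ->
         ipX (Astar f) g - ipX f (Astar g) =
         ipH (Gh1 f) (Gh0 g) - ipH (Gh0 f) (Gh1 g))].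
End Tuples.
End Operator.
End Defs.

(* Main.v *)
Require Import Defs.
From mathcomp Require Import all_boot all_order all_algebra.
From mathcomp Require Import complex reals.
From mathcomp Require Import ring lra.
From mathcomp Require Import boolp classical_sets archimedean.
Import Order.TTheory GRing.Theory Num.Theory.
Local Open Scope ring_scope.
Set Implicit Arguments.
Unset Strict Implicit.

Lemma sq_le_lt (R : realType) (a b : R) : 0 <= a -> 0 <= b -> a ^+ 2 < b ^+ 2 -> a < b.
Proof. move=> *; nra. Qed.
Lemma sq_le (R : realType) (a b : R) : 0 <= b -> a ^+ 2 <= b ^+ 2 -> a <= b.
Proof. move=> *; nra. Qed.


Section Cabs.
Variable R : realType.
Local Notation C := R[i].
Lemma cabs_ge0 (z : C) : 0 <= cabs z. Proof. exact: sqrtr_ge0. Qed.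
Lemma cabs_sq (z : C) : cabs z ^+ 2 = complex.Re z ^+ 2 + complex.Im z ^+ 2.
Proof. by rewrite /cabs sqr_sqrtr // addr_ge0 // sqr_ge0. Qed.

Lemma cabsE (z : C) : cabs z = ComplexField.Normc.normc z.
Proof. by case: z. Qed.
Lemma cabs_eq0 (z : C) : cabs z = 0 -> z = 0.
Proof. by rewrite cabsE => /ComplexField.Normc.eq0_normc . Qed.
Lemma cabs_conj (z : C) : cabs (conjc z) = cabs z.
Proof. by case: z => a b; rewrite /cabs /= sqrrN. Qed.
Lemma cabs_add (a b : C) : cabs (a + b) <= cabs a + cabs b.
Proof. by rewrite !cabsE; apply: le_normcD. Qed.
Lemma cabs_mul (a b : C) : cabs (a * b) = cabs a * cabs b.
Proof. by rewrite !cabsE ComplexField.Normc.normcM. Qed.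
Lemma cabs_opp (a : C) : cabs (- a) = cabs a.
Proof. by rewrite !cabsE normcN. Qed.
Lemma cabs_sub (a b : C) : cabs (a - b) <= cabs a + cabs b.
Proof. by rewrite -(cabs_opp b) cabs_add. Qed.

End Cabs.

Section Sub.
Variable R : realType.
Local Notation C := R[i].
Variable W : lmodType C.
Variables (P : W -> Prop).
Hypothesis sP : subspace P.

Lemma sub0 : P 0. Proof. by case: sP. Qed.
Lemma subD a x y : P x -> P y -> P (a *: x + y). Proof. by case: sP => _; apply. Qed.
Lemma subadd x y : P x -> P y -> P (x + y).
Proof. by move=> ? ?; rewrite -[x]scale1r; apply: subD. Qed.
Lemma subscale a x : P x -> P (a *: x).
Proof. by move=> ?; rewrite -[_ *: _]addr0; apply: subD => //; apply: sub0. Qed.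
Lemma subopp x : P x -> P (- x).
Proof. by move=> ?; rewrite -scaleN1r; apply: subscale. Qed.
Lemma subsub x y : P x -> P y -> P (x - y).
Proof. by move=> ? ?; apply: subadd => //; apply: subopp. Qed.
End Sub.

Section IP.
Variable R : realType.
Local Notation C := R[i].
Variable W : lmodType C.
Variables (P : W -> Prop) (ip : W -> W -> C).
Hypothesis sP : subspace P.
Hypothesis hip : inner_product_on P ip.

Let P0 := sub0 sP.
Let PD := subD sP.
Let Padd := subadd sP.
Let Pscale := subscale sP.
Let Popp := subopp sP.
Let Psub := subsub sP.

Lemma ipDl a x y z : P x -> P y -> P z -> ip (a *: x + y) z = a * ip x z + ip y z.
Proof using sP hip. by case: hip => h _; apply: h. Qed.
Lemma ipC x y : P x -> P y -> ip y x = conjc (ip x y).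
Proof using sP hip. by case: hip => _ [h _]; apply: h. Qed.
Lemma ip_pos x : P x -> x <> 0 -> 0 < ip x x.
Proof using sP hip. by case: hip => _ [_ h]; apply: h. Qed.

Lemma ipaddl x y z : P x -> P y -> P z -> ip (x + y) z = ip x z + ip y z.
Proof using sP hip. by move=> hx hy hz; rewrite -[x in LHS]scale1r ipDl // mul1r. Qed.
Lemma ip0l z : P z -> ip 0 z = 0.
Proof using sP hip.
move=> hz; have := ipaddl P0 P0 hz; rewrite addr0.
by rewrite -{1}[ip 0 z]addr0 => /addrI <-.
Qed.
Lemma ipscalel a x z : P x -> P z -> ip (a *: x) z = a * ip x z.
Proof using sP hip.
move=> hx hz; rewrite -[_ *: _]addr0 ipDl //.
by rewrite ip0l // addr0.
Qed.
Lemma ipDr a x y z : P x -> P y -> P z -> ip z (a *: x + y) = conjc a * ip z x + ip z y.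
Proof using sP hip.
move=> *; rewrite ipC ?ipDl //; last exact: PD.
by rewrite rmorphD rmorphM /= -!ipC.
Qed.
Lemma ipaddr x y z : P x -> P y -> P z -> ip z (x + y) = ip z x + ip z y.
Proof using sP hip. by move=> *; rewrite -[x in LHS]scale1r ipDr // rmorph1 mul1r. Qed.
Lemma ipscaler a x z : P x -> P z -> ip z (a *: x) = conjc a * ip z x.
Proof using sP hip.
move=> hx hz; rewrite (ipC (Pscale a hx) hz) ipscalel // rmorphM.
by rewrite (ipC hx hz).
Qed.
Lemma ip0r z : P z -> ip z 0 = 0.
Proof using sP hip. by move=> hz; rewrite ipC ?ip0l ?rmorph0 //; exact: P0. Qed.
Lemma ipoppl x z : P x -> P z -> ip (- x) z = - ip x z.
Proof using sP hip. by move=> *; rewrite -[- x]scaleN1r ipscalel // mulN1r. Qed.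
Lemma ipoppr x z : P x -> P z -> ip z (- x) = - ip z x.
Proof using sP hip. by move=> *; rewrite -[- x]scaleN1r ipscaler // rmorphN1 mulN1r. Qed.
Lemma ipsubl x y z : P x -> P y -> P z -> ip (x - y) z = ip x z - ip y z.
Proof using sP hip. by move=> *; rewrite ipaddl ?ipoppl //; apply: Popp. Qed.
Lemma ipsubr x y z : P x -> P y -> P z -> ip z (x - y) = ip z x - ip z y.
Proof using sP hip. by move=> *; rewrite ipaddr ?ipoppr //; apply: Popp. Qed.

Definition Q x := complex.Re (ip x x).

Lemma ipxx x : P x -> ip x x = Complex (Q x) 0.
Proof using sP hip.
move=> hx; have := ipC hx hx; rewrite /Q; case: (ip x x) => a b /= [] h.
by rewrite (_ : b = 0) //; lra.
Qed.


Lemma Q0 : Q 0 = 0.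
Proof using sP hip. by rewrite /Q ip0l //; exact: P0. Qed.

Lemma Q_ge0 x : P x -> 0 <= Q x.
Proof using sP hip.
move=> hx; have [->|nx] := eqVneq x 0; first by rewrite Q0.
have := ip_pos hx (elimN eqP nx); rewrite ltcE => /andP[_ h].
exact: ltW.
Qed.

Lemma Q_eq0 x : P x -> Q x = 0 -> x = 0.
Proof using sP hip.
move=> hx hq; have [//|nx] := eqVneq x 0.
have := ip_pos hx (elimN eqP nx); rewrite ltcE => /andP[_ h].
by move: h; rewrite /Q in hq; rewrite hq ltxx.
Qed.

Lemma Q_exp w u t : P w -> P u -> Q (w + t *: u) =
  Q w + 2 * (complex.Re t * complex.Re (ip w u) + complex.Im t * complex.Im (ip w u))
  + (complex.Re t ^+ 2 + complex.Im t ^+ 2) * Q u.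
Proof using sP hip.
move=> hw hu; have htu := Pscale t hu.
rewrite {1}/Q ipaddl ?ipscalel ?ipaddr ?ipscaler //; try exact: Padd.
rewrite (ipC hw hu) (ipxx hw) (ipxx hu).
clear htu; case: t => a b; case: (ip w u) => c d /=.
ring.
Qed.


Notation n := (ipnorm ip).

Lemma n_ge0 x : 0 <= n x.
Proof using sP hip. exact: sqrtr_ge0. Qed.
Lemma n_sq x : P x -> n x ^+ 2 = Q x.
Proof using sP hip. by move=> hx; rewrite /ipnorm sqr_sqrtr //; apply: Q_ge0. Qed.

Lemma n_eq0 x : P x -> n x = 0 -> x = 0.
Proof using sP hip. by move=> hx h; apply: Q_eq0 => //; rewrite -n_sq // h expr0n. Qed.

Lemma CS2 w u : P w -> P u ->
  complex.Re (ip w u) ^+ 2 + complex.Im (ip w u) ^+ 2 <= Q w * Q u.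
Proof using sP hip.
move=> hw hu; have [qu0|qpos] := eqVneq (Q u) 0.
  rewrite qu0 mulr0 (Q_eq0 hu qu0) ip0r // /= expr0n /= addr0 //.
have qu : 0 < Q u by rewrite lt0r qpos Q_ge0.
set a := complex.Re (ip w u); set b := complex.Im (ip w u).
have := Q_ge0 (Padd hw (Pscale (Complex (- a / Q u) (- b / Q u)) hu)).
rewrite Q_exp //= -/a -/b.
have -> : Q w + 2 * (- a / Q u * a + - b / Q u * b) +
   ((- a / Q u) ^+ 2 + (- b / Q u) ^+ 2) * Q u = (Q w * Q u - (a^+2 + b^+2)) / Q u.
  by field; rewrite qpos.
by rewrite pmulr_lge0 ?invr_gt0 // subr_ge0.
Qed.

Lemma CS w u : P w -> P u -> cabs (ip w u) <= n w * n u.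
Proof using sP hip.
move=> hw hu; have h := CS2 hw hu; rewrite -cabs_sq -(n_sq hw) -(n_sq hu) in h.
have := cabs_ge0 (ip w u); have := n_ge0 w; have := n_ge0 u.
move=> h1 h2 h3; apply: sq_le; first exact: mulr_ge0.
by rewrite exprMn.
Qed.

Lemma n_add w u : P w -> P u -> n (w + u) <= n w + n u.
Proof using sP hip.
move=> hw hu; have h := CS hw hu.
have e := Q_exp 1 hw hu; rewrite scale1r /= expr0n /= expr1n addr0 mul1r mul0r addr0 in e.
have hq := n_sq (Padd hw hu); rewrite e -(n_sq hw) -(n_sq hu) in hq.
have hr : complex.Re (ip w u) ^+ 2 <= cabs (ip w u) ^+ 2.
  by rewrite cabs_sq lerDl sqr_ge0.
have := cabs_ge0 (ip w u); have := n_ge0 w; have := n_ge0 u; have := n_ge0 (w + u).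
move=> h1 h2 h3 h4; apply: sq_le; first exact: addr_ge0.
rewrite hq.
move: h hr; set c := cabs _; set r := complex.Re _; set x := n w; set y := n u.
move=> hc hr; have hrc := sq_le h4 hr. have hxy : r <= x * y by exact: le_trans hrc hc. clearbody c r x y; nra.
Qed.


Lemma n_scale t u : P u -> n (t *: u) = cabs t * n u.
Proof using sP hip.
move=> hu; have := Q_exp t P0 hu; rewrite add0r ip0l // Q0 /=. rewrite !mulr0 addr0 mulr0 !add0r.
rewrite /ipnorm /Q => ->; rewrite sqrtrM //; apply: addr_ge0; exact: sqr_ge0.
Qed.
Lemma n_opp u : P u -> n (- u) = n u.
Proof using sP hip.
move=> hu; rewrite -scaleN1r n_scale //.
by rewrite /cabs /= oppr0 expr0n /= addr0 sqrrN expr1n sqrtr1 mul1r.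
Qed.
Lemma n_subC x y : P x -> P y -> n (x - y) = n (y - x).
Proof using sP hip. by move=> hx hy; rewrite -opprB n_opp //; apply: Psub. Qed.


Lemma Q_scale t u : P u -> Q (t *: u) = (complex.Re t ^+ 2 + complex.Im t ^+ 2) * Q u.
Proof using sP hip.
move=> hu; have := Q_exp t P0 hu; rewrite add0r ip0l // Q0 /=.
by rewrite !mulr0 addr0 mulr0 !add0r.
Qed.

Lemma parallelogram a b : P a -> P b -> Q (a + b) + Q (a - b) = 2 * Q a + 2 * Q b.
Proof using sP hip.
move=> ha hb; have e1 := Q_exp 1 ha hb; have e2 := Q_exp (-1) ha hb.
rewrite scale1r in e1; rewrite scaleN1r in e2; rewrite e1 e2 /=.
ring.
Qed.

End IP.

Lemma exN (R : realType) (e : R) : 0 < e -> exists N : nat, forall k, (N <= k)%N -> (k.+1%:R)^-1 < e.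
Proof.
move=> he; exists (Num.bound e^-1) => k hk.
have hi : 0 < e^-1 by rewrite invr_gt0.
have h1 := Num.Theory.archi_boundP (ltW hi).
rewrite invf_plt ?posrE ?ltr0Sn //.
apply: lt_le_trans h1 _; rewrite ler_nat; exact: leq_trans hk (leqnSn k).
Qed.

Lemma le_of_lt_eps (R : realType) (a b : R) : (forall e : R, 0 < e -> a < b + e) -> a <= b.
Proof.
move=> h; rewrite leNgt; apply/negP => hab; have := h (a - b).
by rewrite subr_gt0 => /(_ hab); rewrite addrC subrK ltxx.
Qed.

Section Proj.
Variable R : realType.
Local Notation C := R[i].
Variable W : lmodType C.
Variables (P : W -> Prop) (ip : W -> W -> C).
Hypothesis sP : subspace P.
Hypothesis hip : inner_product_on P ip.
Hypothesis hcomp : complete_on P (ipnorm ip).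
Local Notation n := (ipnorm ip).
Local Notation Q := (Q ip).
Variable M : W -> Prop.
Hypotheses (sM : subspace M) (MP : forall x, M x -> P x)
  (Mcl : forall u x, (forall k, M (u k)) -> P x -> converges_to n u x -> M x).

Lemma projection x : P x -> exists m, M m /\ forall u, M u -> ip (x - m) u = 0.
Proof.
move=> hx.
have PM m : M m -> P (x - m) by move=> hm; apply: subsub => //; exact: MP.
pose S : set R := fun r => exists m, M m /\ r = Q (x - m).
have lb0 : forall r, S r -> 0 <= r by move=> r [m [hm ->]]; exact (Q_ge0 sP hip (PM _ hm)).
have hS : has_inf S.
  split; last by exists 0.
  by exists (Q (x - 0)); exists 0; split => //; exact: sub0.
set d := inf S.
have dlb m : M m -> d <= Q (x - m).
  by move=> hm; apply: (ge_inf (proj2 hS)); exists m.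
have d0 : 0 <= d by apply: lb_le_inf => //; case: hS.
have hk : forall k : nat, exists m, M m /\ Q (x - m) < d + (k.+1%:R)^-1.
  move=> k; have hi : 0 < (k.+1%:R : R)^-1 by rewrite invr_gt0 ltr0Sn.
  have [r [m [hm ->]] hr] := inf_adherent hi hS.
  by exists m.
case: (choice hk) => mk hmk.
have Pmk k : P (mk k) by apply: MP; case: (hmk k).
have para k j : Q (mk j - mk k) <= 2 * (k.+1%:R)^-1 + 2 * (j.+1%:R)^-1.
  have [hmk1 hq1] := hmk k; have [hmj1 hq2] := hmk j.
  have h2 : (1 + 1 : C) != 0.
    by apply/eqP => /(congr1 (@complex.Re R)) /=; lra.
  pose v := (1 + 1 : C)^-1 *: (mk k + mk j).
  have hv : M v by apply: subscale => //; apply: subadd.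
  have e1 : (x - mk k) + (x - mk j) = (1 + 1 : C) *: (x - v).
    rewrite scalerBr scalerA mulfV // scale1r scalerDl scale1r.
    rewrite opprD !addrA; congr (_ - _); rewrite -!addrA; congr (_ + _).
    by rewrite addrC.
  have e2 : (x - mk k) - (x - mk j) = mk j - mk k.
    by rewrite opprB addrC addrA subrK.
  have := parallelogram sP hip (PM _ hmk1) (PM _ hmj1).
  rewrite e1 e2 (Q_scale sP hip _ (PM _ hv)).
  have := dlb _ hv; rewrite /=. have -> : ((1 + 1) ^+ 2 + (0 + 0) ^+ 2 : R) = 4 by ring. move: hq1 hq2. set ik := (k.+1%:R : R)^-1. set ij := (j.+1%:R : R)^-1. clearbody v d ik ij. lra.
have cau : cauchy_seq n mk.
  move=> e he; have he2 : 0 < e ^+ 2 / 4 by rewrite divr_gt0 // exprn_gt0.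
  have [N hN] := exN he2; exists N => a b ha hb.
  have := para b a; have := hN _ ha; have := hN _ hb.
  have := n_sq sP hip (subsub sP (Pmk a) (Pmk b)).
  have : 0 <= n (mk a - mk b) := sqrtr_ge0 _.
  move=> h0 hsq h1 h2 h3; rewrite -hsq in h3.
  apply: (sq_le_lt h0 (ltW he)); move: h1 h2 h3.
  set ia := (a.+1%:R : R)^-1; set ib := (b.+1%:R : R)^-1; clearbody ia ib; lra.
have [m [Pm hconv]] := hcomp Pmk cau.
have Mm : M m by apply: (Mcl (u:=mk)) => // k; case: (hmk k).
have Pxm := PM _ Mm.
have Qle : Q (x - m) <= d.
  apply: le_of_lt_eps => eps heps.
  have he2 : 0 < eps / 2 by rewrite divr_gt0.
  have [N1 hN1] := exN he2.
  have h25 : 0 < 2 * (2 * d + 5) by lra.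
  have hdl : 0 < eps / (2 * (2 * d + 5)) by rewrite divr_gt0.
  have [N2 hN2] := hconv _ hdl.
  have [N3 hN3] := hconv _ ltr01.
  pose k := maxn N1 (maxn N2 N3).
  have k1 : (N1 <= k)%N by rewrite leq_maxl.
  have k2 : (N2 <= k)%N by rewrite (leq_trans _ (leq_maxr _ _)) // leq_maxl.
  have k3 : (N3 <= k)%N by rewrite (leq_trans _ (leq_maxr _ _)) // leq_maxr.
  have hB1 := hN2 _ k2; have hB2 := hN3 _ k3; have hik := hN1 _ k1.
  have [hmkk hq] := hmk k.
  have htri := n_add sP hip (PM _ hmkk) (subsub sP (Pmk k) Pm).
  rewrite (_ : x - mk k + (mk k - m) = x - m) in htri; last by rewrite addrA subrK.
  have hsA := n_sq sP hip (PM _ hmkk).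
  have hsB := n_sq sP hip Pxm.
  rewrite -hsA in hq; rewrite -hsB.
  have ik1 : (k.+1%:R : R)^-1 <= 1 by rewrite invf_le1 ?ler1n ?ltr0Sn.
  have ik0 : 0 <= (k.+1%:R : R)^-1 by rewrite invr_ge0 ler0n.
  have hA0 : 0 <= n (x - mk k) := sqrtr_ge0 _.
  have hB0 : 0 <= n (mk k - m) := sqrtr_ge0 _.
  have hX0 : 0 <= n (x - m) := sqrtr_ge0 _.
  have hdel : (2 * d + 5) * (eps / (2 * (2 * d + 5))) = eps / 2.
    by field; lra.
  move: hB1 hB2 hik hq htri ik1 ik0 hA0 hB0 hX0 hdel.
  set A := n (x - mk k); set B := n (mk k - m); set X := n (x - m).
  set ik := (k.+1%:R : R)^-1; set del := eps / (2 * (2 * d + 5)).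
  clearbody A B X ik del d => hB1 hB2 hik hq htri ik1 ik0 hA0 hB0 hX0 hdel.
  have hA : A <= d + 2 by nra.
  have hX2 : X ^+ 2 <= A ^+ 2 + (2 * d + 5) * B by nra.
  have hB3 : (2 * d + 5) * B <= eps / 2 by nra.
  lra.
exists m; split => // u hu.
have Pu := MP hu.
have q0 := Q_ge0 sP hip Pu.
case E: (ip (x - m) u) => [a b].
pose s := (Q u + 1)^-1.
have hs : s * (Q u + 1) = 1 by rewrite mulVf //; apply/eqP => h; lra.
have s0 : 0 < s by rewrite invr_gt0; lra.
pose t : C := Complex (s * a) (s * b).
have hm' : M (m + t *: u) by rewrite addrC; apply: subD.
have := dlb _ hm'.
rewrite (_ : x - (m + t *: u) = (x - m) + (- t) *: u); last by rewrite opprD addrA scaleNr.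
rewrite (Q_exp sP hip _ Pxm Pu) E /= => h.
move: Qle h hs s0 q0; clearbody s d; move: (Q u) (Q (x - m)) => qu qx hle h hs s0 q0.
clear hm' t.
have h1 : 0 <= s * (a ^+ 2 + b ^+ 2) * (s * qu - 2).
  have -> : s * (a ^+ 2 + b ^+ 2) * (s * qu - 2) = 2 * (- (s * a) * a + - (s * b) * b) +
    ((- (s * a)) ^+ 2 + (- (s * b)) ^+ 2) * qu by ring.
  lra.
have e1 : s * qu - 2 = - (1 + s) by lra.
rewrite e1 in h1.
have K1 : 0 <= a ^+ 2 + b ^+ 2 by apply: addr_ge0; apply: sqr_ge0.
have K0 : a ^+ 2 + b ^+ 2 <= 0.
  move: h1 K1; set K := a ^+ 2 + b ^+ 2; clearbody K => h1 K1; nra.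
have a0 : a = 0 by nra.
have b0 : b = 0 by nra.
by rewrite a0 b0.
Qed.
End Proj.


Lemma conj_mulJ (R : realType) (a b : R[i]) : conjc (conjc a * b) = a * conjc b.
Proof. by case: a => a1 a2; case: b => b1 b2; apply/eqP; rewrite eq_complex /=; apply/andP; split; apply/eqP; ring. Qed.

Section Riesz.
Variable R : realType.
Local Notation C := R[i].
Variable W : lmodType C.
Variables (P : W -> Prop) (ip : W -> W -> C).
Hypothesis sP : subspace P.
Hypothesis hip : inner_product_on P ip.
Hypothesis hcomp : complete_on P (ipnorm ip).
Local Notation n := (ipnorm ip).

Lemma lin0 (l : W -> C) : (forall a x y, P x -> P y -> l (a *: x + y) = a * l x + l y) ->
  l 0 = 0.
Proof.
move=> hl; have := hl 1 0 0 (sub0 sP) (sub0 sP); rewrite scaler0 addr0 mul1r.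
by rewrite -{1}[l 0]addr0 => /addrI <-.
Qed.

Lemma riesz (l : W -> C) :
  (forall a x y, P x -> P y -> l (a *: x + y) = a * l x + l y) ->
  (forall u x, (forall k, P (u k) /\ l (u k) = 0) -> P x -> converges_to n u x -> l x = 0) ->
  exists y, P y /\ forall x, P x -> l x = ip x y.
Proof.
move=> hl hcl.
have l0 := lin0 hl.
have lZ a x : P x -> l (a *: x) = a * l x.
  by move=> hx; rewrite -[a *: x]addr0 hl // ?l0 ?addr0 //; exact: sub0.
have lB x y : P x -> P y -> l (x - y) = l x - l y.
  move=> hx hy; rewrite -scaleN1r addrC hl // mulN1r addrC //.
pose M := fun x => P x /\ l x = 0.
have sM : subspace M.
  split; first by split; [exact: sub0|].
  move=> a x y [hx lx] [hy ly]; split; first exact: subD.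
  by rewrite hl // lx ly mulr0 addr0.
have MP x : M x -> P x by case.
have Mcl u x : (forall k, M (u k)) -> P x -> converges_to n u x -> M x.
  by move=> hu hx hc; split => //; apply: (hcl u).
case: (pselect (exists x0, P x0 /\ l x0 <> 0)) => [[x0 [hx0 lx0]] | H]; last first.
  exists 0; split; first exact: sub0.
  move=> x hx; rewrite (ip0r sP hip hx).
  by case: (pselect (l x = 0)) => // hn; exfalso; apply: H; exists x.
have [m [[Pm lm] hort]] := projection sP hip hcomp sM MP Mcl hx0.
set z := x0 - m.
have Pz : P z by apply: subsub.
have lz : l z = l x0 by rewrite /z lB // lm subr0.
have zn0 : z <> 0 by move=> hz; apply: lx0; rewrite -lz hz l0.
have qz : 0 < Q ip z.
  by rewrite lt0r (Q_ge0 sP hip Pz) andbT; apply/eqP => /(Q_eq0 sP hip Pz).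
pose c : C := Complex (Q ip z) 0.
have czz : ip z z = c by rewrite (ipxx sP hip Pz).
have cc : conjc c = c by rewrite /c /= oppr0.
have c0 : c != 0 by apply/eqP => /(congr1 (@complex.Re R)) /= h; rewrite h ltxx in qz.
have lz0 : l z != 0 by rewrite lz; apply/eqP.
pose ci : C := Complex (Q ip z)^-1 0.
have hcc : ci * c = 1.
  rewrite /ci /c; apply/eqP; rewrite eq_complex /= !mulr0 !mul0r subr0 addr0 mulVf ?eqxx //.
  by rewrite gt_eqF.
have cic : conjc ci = ci by rewrite /ci /= oppr0.
exists ((conjc (l z) * ci) *: z); split; first exact: subscale.
move=> x hx.
pose v := x - (l x / l z) *: z.
have Pv : P v by apply: subsub => //; exact: subscale.
have Mv : M v by split => //; rewrite /v lB ?lZ //; [field | exact: subscale].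
have h1 := hort _ Mv; rewrite -/z in h1.
have h2 : ip v z = 0 by rewrite (ipC sP hip Pz Pv) h1 rmorph0.
rewrite /v (ipsubl sP hip hx (subscale sP _ Pz) Pz) (ipscalel sP hip _ Pz Pz) czz in h2.
rewrite (ipscaler sP hip _ Pz hx) conj_mulJ cic.
have -> : ip x z = l x / l z * c by apply/eqP; rewrite -subr_eq0 h2.
rewrite (_ : l z * ci * (l x / l z * c) = (ci * c) * (l z * l x / l z)); last by ring.
by rewrite hcc mul1r; field.
Qed.
End Riesz.

Lemma cabs_small (R : realType) (z : R[i]) : (forall e : R, 0 < e -> cabs z < e) -> z = 0.
Proof.
move=> h; apply: cabs_eq0; apply/eqP; rewrite eq_le cabs_ge0 andbT.
by apply: le_of_lt_eps => e he; rewrite add0r; apply: h.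
Qed.

Lemma Re_le_cabs (R : realType) (z : R[i]) : complex.Re z <= cabs z.
Proof. by apply: sq_le; [exact: cabs_ge0 | rewrite cabs_sq lerDl sqr_ge0]. Qed.

Lemma conv_cauchy (R : realType) (W : lmodType R[i]) (P : W -> Prop) (ip : W -> W -> R[i])
  (sP : subspace P) (hip : inner_product_on P ip) u x :
  (forall k, P (u k)) -> P x -> converges_to (ipnorm ip) u x -> cauchy_seq (ipnorm ip) u.
Proof.
move=> hu hx hc e he; have he2 : 0 < e / 2 by rewrite divr_gt0.
have [N hN] := hc _ he2; exists N => a b ha hb.
have := n_add sP hip (subsub sP (hu a) hx) (subsub sP hx (hu b)).
rewrite addrA subrK (n_subC sP hip hx (hu b)) => h.
have := hN _ ha; have := hN _ hb; lra.
Qed.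

Lemma ip_unique (R : realType) (W : lmodType R[i]) (P : W -> Prop) (ip : W -> W -> R[i])
  (sP : subspace P) (hip : inner_product_on P ip) w1 w2 :
  P w1 -> P w2 -> (forall f, P f -> ip f w1 = ip f w2) -> w1 = w2.
Proof.
move=> h1 h2 h; have hd := subsub sP h1 h2.
have : ip (w1 - w2) (w1 - w2) = 0 by rewrite (ipsubr sP hip h1 h2 hd) h // subrr.
move=> e; have : Q ip (w1 - w2) = 0 by rewrite /Q e.
by move/(Q_eq0 sP hip hd)/eqP; rewrite subr_eq0 => /eqP.
Qed.


Section Main.
Variable R : realType.
Local Notation C := R[i].
Variable W : lmodType C.
Variables (PH Pmp Ppm : W -> Prop) (ipH ipmp ippm : W -> W -> C) (pair : W -> W -> C).
Hypotheses (sH : subspace PH) (hH : inner_product_on PH ipH) (cH : complete_on PH (ipnorm ipH)).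
Hypotheses (smp : subspace Pmp) (hmp : inner_product_on Pmp ipmp) (cmp : complete_on Pmp (ipnorm ipmp)).
Hypotheses (spm : subspace Ppm) (hpm : inner_product_on Ppm ippm) (cpm : complete_on Ppm (ipnorm ippm)).
Hypothesis dmp : dense_in (tilde PH Pmp) Pmp (ipnorm ipmp).
Hypothesis dpm : dense_in (tilde PH Ppm) Ppm (ipnorm ippm).
Hypothesis sup1 : forall h, tilde PH Ppm h ->
         is_sup_of (fun r => exists g, [/\ tilde PH Pmp g, g <> 0 &
                      r = cabs (ipH g h) / ipnorm ipmp g])
                   (ipnorm ippm h).
Hypothesis sup2 : forall h, tilde PH Pmp h ->
         is_sup_of (fun r => exists g, [/\ tilde PH Ppm g, g <> 0 &
                      r = cabs (ipH g h) / ipnorm ippm g])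
                   (ipnorm ipmp h).
Hypothesis pl : forall (a : C) x y z, Pmp x -> Pmp y -> Ppm z ->
         pair (a *: x + y) z = a * pair x z + pair y z.
Hypothesis pr : forall (a : C) x y z, Pmp x -> Ppm y -> Ppm z ->
         pair x (a *: y + z) = cconj a * pair x y + pair x z.
Variable c : R.
Hypothesis c0 : 0 < c.
Hypothesis hc : forall x y, Pmp x -> Ppm y ->
         cabs (pair x y) <= c * ipnorm ipmp x * ipnorm ippm y.
Hypothesis pe : forall x y, tilde PH Pmp x -> tilde PH Ppm y -> pair x y = ipH x y.

Local Notation nH := (ipnorm ipH).
Local Notation nmp := (ipnorm ipmp).
Local Notation npm := (ipnorm ippm).

Lemma plB x y z : Pmp x -> Pmp y -> Ppm z -> pair (x - y) z = pair x z - pair y z.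
Proof.
move=> hx hy hz; rewrite -scaleN1r addrC pl // mulN1r addrC //.
Qed.
Lemma prB x y z : Pmp x -> Ppm y -> Ppm z -> pair x (y - z) = pair x y - pair x z.
Proof.
move=> hx hy hz; rewrite -scaleN1r addrC pr // /cconj rmorphN1 mulN1r addrC //.
Qed.
Lemma pr0 x : Pmp x -> pair x 0 = 0.
Proof.
move=> hx; have := prB hx (sub0 spm) (sub0 spm); rewrite subrr => ->; exact: subrr.
Qed.

Definition rel h y := [/\ Ppm h, Pmp y & forall x, Pmp x -> pair x h = ipmp x y].

Lemma J_ex h : Ppm h -> exists y, rel h y.
Proof.
move=> hh.
suff hcl : forall u x, (forall k, Pmp (u k) /\ pair (u k) h = 0) -> Pmp x ->
    converges_to nmp u x -> pair x h = 0.
  have [y [hy e]] := riesz smp hmp cmp (l := fun x => pair x h)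
    (fun a x y hx hy => pl a hx hy hh) hcl.
  by exists y; split.
move=> u x hu hx hconv; apply: cabs_small => e he.
have hd : 0 < e / (c * npm h + 1).
  by rewrite divr_gt0 // ltr_pwDr // mulr_ge0 ?sqrtr_ge0 // ltW.
have [N hN] := hconv _ hd; have [Pu lu] := hu N.
have hxu := hc (subsub smp hx Pu) hh.
rewrite plB // lu subr0 (n_subC smp hmp hx Pu) in hxu.
have := hN _ (leqnn N).
have hn0 : 0 <= npm h := sqrtr_ge0 _.
have hm0 : 0 <= nmp (u N - x) := sqrtr_ge0 _.
have hde : (c * npm h + 1) * (e / (c * npm h + 1)) = e.
  field; apply/eqP => h0; have : 0 <= c * npm h by rewrite mulr_ge0 // ltW.
  lra.
move: hxu hde hn0 hm0; set A := nmp _; set B := npm h; set d := e / _.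
clearbody A B d => h1 h2 h3 h4 h5.
nra.
Qed.

Lemma rel_sub h1 y1 h2 y2 : rel h1 y1 -> rel h2 y2 -> rel (h1 - h2) (y1 - y2).
Proof.
move=> [a1 b1 e1] [a2 b2 e2]; split; try exact: subsub.
by move=> x hx; rewrite prB // e1 // e2 // (ipsubr smp hmp b1 b2 hx).
Qed.

Lemma rel_bd h y : rel h y -> nmp y <= c * npm h.
Proof.
move=> [hh hy e]; have := hc hy hh; rewrite e //.
have := Re_le_cabs (ipmp y y); rewrite -/(Q ipmp y) -(n_sq smp hmp hy).
have := sqrtr_ge0 (complex.Re (ipmp y y)); have := sqrtr_ge0 (complex.Re (ippm h h)).
rewrite -/(ipnorm ipmp y) -/(ipnorm ippm h).
move: (cabs _) (nmp y) (npm h) => a b d h1 h2 h3 h4.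
have := mulr_ge0 (ltW c0) h1; nra.
Qed.

Lemma annih z : Pmp z -> (forall h, Ppm h -> pair z h = 0) -> z = 0.
Proof.
move=> hz hz0; apply: (n_eq0 smp hmp hz); apply/eqP; rewrite eq_le sqrtr_ge0 andbT.
apply: le_of_lt_eps => e he; rewrite add0r; move: e he => /= e he.
have c0l := c0. have c2 : 0 < 2 * (1 + c) by lra.
have he' : 0 < e / (2 * (1 + c)) by apply: divr_gt0.
have [y' [[y'H y'm] hzy]] := dmp hz he'.
have [ub lub] := sup2 (conj y'H y'm).
have hb : nmp y' <= c * nmp (y' - z).
  apply: lub => r [g [[gH gpm] gn0 ->]].
  have gpos : 0 < npm g.
    rewrite lt0r sqrtr_ge0 andbT; apply/eqP => /(n_eq0 spm hpm gpm); exact: gn0.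
  rewrite ler_pdivrMr // (ipC sH hH y'H gH) cabs_conj -pe; [| by split | by split].
  rewrite -[pair y' g]subr0 -(hz0 _ gpm) -plB //.
  by apply: hc => //; exact: subsub.
have htri := n_add smp hmp (subsub smp hz y'm) y'm.
rewrite subrK in htri.
rewrite (n_subC smp hmp y'm hz) in hb.
have hde : (1 + c) * (e / (2 * (1 + c))) = e / 2 by field; lra.
have := sqrtr_ge0 (complex.Re (ipmp (z - y') (z - y'))); rewrite -/(ipnorm ipmp (z - y')).
move: htri hb hzy hde; set A := nmp z; set B := nmp (z - y'); set Y := nmp y'; set d := e / _.
clearbody A B Y d => *; nra.
Qed.

Lemma lb_tilde h y : tilde PH Ppm h -> rel h y -> npm h <= nmp y.
Proof.
move=> ht [hh hy e]; have [ub lub] := sup1 ht; apply: lub => r [g [[gH gmp] gn0 ->]].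
have gpos : 0 < nmp g.
  rewrite lt0r sqrtr_ge0 andbT; apply/eqP => /(n_eq0 smp hmp gmp); exact: gn0.
rewrite ler_pdivrMr // -pe; [| by split | by []].
by rewrite e // mulrC; apply: (CS smp hmp).
Qed.

Lemma lb h y : rel h y -> npm h <= nmp y.
Proof.
move=> hr; have [hh hy e] := hr; have c0l := c0.
apply: le_of_lt_eps => eps heps; move: eps heps => /= eps heps.
have c2 : 0 < 2 * (1 + c) by lra.
have he' : 0 < eps / (2 * (1 + c)) by apply: divr_gt0.
have [h' [[h'H h'pm] hhh]] := dpm hh he'.
have [y' hr'] := J_ex h'pm.
have hy' : Pmp y' by case: hr'.
have l1 := lb_tilde (conj h'H h'pm) hr'.
have l2 := rel_bd (rel_sub hr' hr).
rewrite (n_subC spm hpm h'pm hh) in l2.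
have t1 := n_add spm hpm (subsub spm hh h'pm) h'pm; rewrite subrK in t1.
have t2 := n_add smp hmp hy (subsub smp hy' hy); rewrite addrC subrK in t2.
have hde : (1 + c) * (eps / (2 * (1 + c))) = eps / 2 by field; lra.
move: l1 l2 t1 t2 hhh hde; set d := eps / _; clearbody d => *; nra.
Qed.

Lemma Mcl u y : (forall k, exists h, rel h (u k)) -> Pmp y -> converges_to nmp u y ->
  exists g, rel g y.
Proof.
move=> hk hy hconv; have c0l := c0.
case: (choice hk) => f hf.
have Pu k : Pmp (u k) by case: (hf k).
have Ph k : Ppm (f k) by case: (hf k).
have cau_u := conv_cauchy smp hmp Pu hy hconv.
have cau_h : cauchy_seq npm f.
  move=> e he; have [N hN] := cau_u _ he; exists N => a b ha hb.
  exact: le_lt_trans (lb (rel_sub (hf a) (hf b))) (hN _ _ ha hb).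
have [g [Pg hgconv]] := cpm Ph cau_h.
exists g; split => // x hx; apply/eqP; rewrite -subr_eq0; apply/eqP.
apply: cabs_small => e he.
have hx0 : 0 <= nmp x := sqrtr_ge0 _.
have hpos : 0 < (c + 1) * (nmp x + 1) by apply: mulr_gt0; lra.
have hd : 0 < e / ((c + 1) * (nmp x + 1)) by apply: divr_gt0.
have [N1 hN1] := hgconv _ hd; have [N2 hN2] := hconv _ hd.
pose k := maxn N1 N2.
have h1 := hN1 _ (leq_maxl N1 N2); have h2 := hN2 _ (leq_maxr N1 N2); rewrite -/k in h1 h2.
have [_ _ ek] := hf k.
have E : pair x g - ipmp x y = ipmp x (u k - y) - pair x (f k - g).
  rewrite prB // (ipsubr smp hmp (Pu k) hy hx) ek //; ring.
rewrite E.
have t1 := cabs_sub (ipmp x (u k - y)) (pair x (f k - g)).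
have t2 := CS smp hmp hx (subsub smp (Pu k) hy).
have t3 := hc hx (subsub spm (Ph k) Pg).
have hde : (c + 1) * (nmp x + 1) * (e / ((c + 1) * (nmp x + 1))) = e.
  field; apply/andP; split; apply/eqP => h0; [have : 0 <= nmp x by [] | idtac]; lra.
have := sqrtr_ge0 (complex.Re (ipmp (u k - y) (u k - y))); rewrite -/(ipnorm ipmp (u k - y)).
have := sqrtr_ge0 (complex.Re (ippm (f k - g) (f k - g))); rewrite -/(ipnorm ippm (f k - g)).
move: hx0 t1 t2 t3 hde h1 h2; set d := e / _; set A := nmp x; set B := nmp (u k - y); set D := npm (f k - g).
set a1 := cabs (ipmp _ _); set a2 := cabs (pair _ _); set a3 := cabs (_ - _).
clearbody d A B D a1 a2 a3.
move=> hx0 t1 t2 t3 hde h1 h2 hD hB. have f1 : A * B <= A * d by nra. have cA : 0 <= c * A by nra. have f2 : c * A * D <= c * A * d by nra. have f3 : 0 < (c + 1) * d by nra. nra.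
Qed.

Lemma sharp_surj (V Vinv Vsharp : W -> W) :
  (forall x, PH x -> Pmp (V x)) ->
  (forall (a : C) x y, PH x -> PH y -> V (a *: x + y) = a *: V x + V y) ->
  (forall x0, PH x0 -> forall e : R, 0 < e -> exists d : R, 0 < d /\
         forall x, PH x -> nmp (V x - V x0) < d -> nH (x - x0) < e) ->
  (forall x, PH x -> Vinv (V x) = x) ->
  (forall y, Pmp y -> PH (Vinv y) /\ V (Vinv y) = y) ->
  (forall g, Ppm g -> PH (Vsharp g)) ->
  (forall f g, PH f -> Ppm g -> pair (V f) g = ipH f (Vsharp g)) ->
  forall h1, PH h1 -> exists g, Ppm g /\ Vsharp g = h1.
Proof.
move=> Vmap Vlin Vicont hVV hVi hs1 hs2 h1 hh1.
have Vinv_lin a y1 y2 : Pmp y1 -> Pmp y2 -> Vinv (a *: y1 + y2) = a *: Vinv y1 + Vinv y2.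
  move=> hy1 hy2; have [p1 e1] := hVi _ hy1; have [p2 e2] := hVi _ hy2.
  by rewrite -{1}e1 -{1}e2 -Vlin // hVV //; apply: subD.
pose l := fun y => ipH (Vinv y) h1.
have llin a x y : Pmp x -> Pmp y -> l (a *: x + y) = a * l x + l y.
  move=> hx hy; rewrite /l Vinv_lin //.
  by rewrite (ipDl sH hH a (hVi _ hx).1 (hVi _ hy).1 hh1).
have lcl u y : (forall k, Pmp (u k) /\ l (u k) = 0) -> Pmp y -> converges_to nmp u y -> l y = 0.
  move=> hu hy hconv; apply: cabs_small => e he.
  have hn0 : 0 <= nH h1 := sqrtr_ge0 _.
  have he1 : 0 < e / (nH h1 + 1) by apply: divr_gt0 => //; lra.
  have [Py0 Vy] := hVi _ hy.
  have [d [hd hdd]] := Vicont _ Py0 _ he1.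
  have [N hN] := hconv _ hd; have [PuN luN] := hu N.
  have [PxN VxN] := hVi _ PuN.
  have h2 := hdd _ PxN; rewrite VxN Vy in h2; have h3 := h2 (hN _ (leqnn N)).
  have E : l y = ipH (Vinv y - Vinv (u N)) h1.
    by rewrite (ipsubl sH hH Py0 PxN hh1) -/(l y) -/(l (u N)) luN subr0.
  rewrite E.
  have t := CS sH hH (subsub sH Py0 PxN) hh1.
  rewrite (n_subC sH hH Py0 PxN) in t.
  have hde : (nH h1 + 1) * (e / (nH h1 + 1)) = e by field; lra.
  have := sqrtr_ge0 (complex.Re (ipH (Vinv (u N) - Vinv y) (Vinv (u N) - Vinv y))).
  rewrite -/(ipnorm ipH (Vinv (u N) - Vinv y)).
  move: t hde h3 hn0; set A := nH (_ - _); set B := nH h1; set a := cabs _; set d' := e / _.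
  clearbody A B a d' => t hde h3 hn0 hA0.
  have f1 : A * B <= d' * B by nra.
  nra.
have [yl [Pyl hyl]] := riesz smp hmp cmp llin lcl.
pose M := fun y => exists h, rel h y.
have sM : subspace M.
  split.
    exists 0; split; [exact: sub0 | exact: sub0 |].
    by move=> x hx; rewrite pr0 // (ip0r smp hmp hx).
  move=> a y1 y2 [k1 [p1 q1 e1]] [k2 [p2 q2 e2]].
  exists (a *: k1 + k2); split; [exact: subD | exact: subD |].
  by move=> x hx; rewrite pr // e1 // e2 // (ipDr smp hmp a q1 q2 hx).
have MP y : M y -> Pmp y by case=> h [].
have Mc u y : (forall k, M (u k)) -> Pmp y -> converges_to nmp u y -> M y.
  by move=> hu hy hc'; apply: (Mcl hu hy hc').
have [m [[g [Pg Pm eg]] hort]] := projection smp hmp cmp sM MP Mc Pyl.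
have ym : yl = m.
  apply/eqP; rewrite -subr_eq0; apply/eqP; apply: annih; first exact: subsub.
  move=> h hh; have [yh rh] := J_ex hh.
  have [_ Pyh eh] := rh.
  by rewrite eh; [apply: hort; exists h | exact: subsub].
exists g; split => //.
apply: (ip_unique sH hH (hs1 _ Pg) hh1) => f hf.
rewrite -hs2 // eg; last exact: Vmap.
by rewrite -ym -hyl; [rewrite /l hVV | exact: Vmap].
Qed.
End Main.

Unset Implicit Arguments.
Set Strict Implicit.

Theorem proposition6p2 (R : realType)
  (X : lmodType R[i]) (ipX : X -> X -> R[i])
  (DA : X -> Prop) (A Astar : X -> X)
  (W : lmodType R[i]) (PH Pmp Ppm : W -> Prop) (ipH ipmp ippm : W -> W -> R[i])
  (pair : W -> W -> R[i]) (G0 G1 : X -> W) (V Vinv Vsharp : W -> W) :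
  hilbert_on (fun _ : X => True) ipX ->
  closed_densely_defined_symmetric ipX DA A ->
  is_adjoint ipX DA A Astar ->
  mixed_order_duality PH Pmp Ppm ipH ipmp ippm ->
  pairing_extension PH Pmp Ppm ipH ipmp ippm pair ->
  m_boundary_tuple ipX DA A Astar Pmp Ppm pair G0 G1 ->
  linear_homeomorphism PH (ipnorm ipH) Pmp (ipnorm ipmp) V ->
  inverse_on PH Pmp V Vinv ->
  pairing_adjoint PH Ppm ipH pair V Vsharp ->
  boundary_triple ipX DA A Astar PH ipH (Vinv \o G0) (Vsharp \o G1).
Proof.
move=> HX HA Hadj Hmod Hpair Hm HV Hinv Hadjs.
case: Hmod => [[hHs hmps hpms] [dH1 dmp dH2 dpm] _ [sup1 sup2]].
case: hHs => sH hH cH; case: hmps => smp hmp cmp; case: hpms => spm hpm cpm.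
case: Hpair => pl pr [c0 hc0] pe.
have [c [cpos hc]] : exists c : R, 0 < c /\ forall x y, Pmp x -> Ppm y ->
    cabs (pair x y) <= c * ipnorm ipmp x * ipnorm ippm y.
  exists (`|c0| + 1); split; first by have := normr_ge0 c0; lra.
  move=> x y hx hy; apply: le_trans (hc0 x y hx hy) _.
  have := ler_norm c0; have := normr_ge0 c0.
  have := sqrtr_ge0 (complex.Re (ipmp x x)); have := sqrtr_ge0 (complex.Re (ippm y y)).
  rewrite -/(ipnorm ipmp x) -/(ipnorm ippm y).
  move: (ipnorm ipmp x) (ipnorm ippm y) (`|c0|) => a b d h1 h2 h3 h4.
  have hab : 0 <= a * b by exact: mulr_ge0.
  nra.
case: Hm => hG hlin hM1 hM2.
case: HV => [[Vmap Vlin] Vinj Vsurj Vcont Vicont].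
case: Hinv => hVV hVi.
case: Hadjs => hs1 hs2.
split.
- move=> f hf /=; have [g0 g1] := hG f hf; split; [exact: (hVi _ g0).1 | exact: hs1].
- move=> a f g hf hg /=; have [e0 e1] := hlin a f g hf hg; rewrite e0 e1.
  have [f0 f1] := hG f hf; have [g0 g1] := hG g hg.
  split.
    have [p1 q1] := hVi _ f0; have [p2 q2] := hVi _ g0.
    by rewrite -{1}q1 -{1}q2 -Vlin // hVV //; apply: subD.
  apply: (ip_unique sH hH); first by apply: hs1; apply: (subD spm).
    by apply: (subD sH); apply: hs1.
  move=> h hh; rewrite -hs2 //; last by apply: (subD spm).
  rewrite pr //; last exact: Vmap.
  by rewrite /cconj (ipDr sH hH a (hs1 _ f1) (hs1 _ g1) hh) -!hs2.
- move=> h0 h1 hh0 hh1.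
  have [g [Pg eg]] := sharp_surj sH hH smp hmp cmp spm hpm cpm dmp dpm sup1 sup2 pl pr
     cpos hc pe Vmap Vlin Vicont hVV hVi hs1 hs2 hh1.
  have [f [hf e0 e1]] := hM1 (V h0) g (Vmap _ hh0) Pg.
  by exists f; split => //=; [rewrite e0 hVV | rewrite e1].
- move=> f g hf hg /=; rewrite hM2 // /pair_rev /cconj.
  have [f0 f1] := hG f hf; have [g0 g1] := hG g hg.
  have [p1 q1] := hVi _ f0; have [p2 q2] := hVi _ g0.
  rewrite -{1}q2 -{1}q1 (hs2 _ _ p2 f1) (hs2 _ _ p1 g1).
  by rewrite -(ipC sH hH p2 (hs1 _ f1)).
Qed.
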